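(* Let $U=(U_{ij})_{i,j=1}^M$, $U_{ij}\in M_M(\mathbb C)$, and $V=(V_{ab})_{a,b=1}^N$, $V_{ab}\in M_N(\mathbb C)$, be projective models and $Q\in M_{M\times N}(\mathbb T)$. Then the matrix $W^\circ=U\,{}_Q\!\otimes V$ given by $$(W^\circ_{ia,jb})_{kc,ld}=\frac{Q_{ka}Q_{lb}}{Q_{kb}Q_{la}}(U_{ij})_{kl}(V_{ab})_{cd}$$ is a projective model. Moreover, with $W=U\otimes_QV$, we have $W'=U'\,{}_Q\!\otimes V'$ and $(W^\circ)'=U'\otimes_QV'$.
   Context: A square matrix with entries in a $C^*$-algebra is magic if its entries are orthogonal projections and each row and column sums to $1$. For $U=(U_{ij})_{i,j=1}^n$, $U_{ij}\in M_n(\mathbb C)$, $U'$ is defined by $(U'_{kl})_{ij}=(U_{ij})_{kl}$; $U$ is a projective model if $U$ and $U'$ are magic. The deformed tensor product $U\otimes_QV$ is defined by $((U\otimes_QV)_{ia,jb})_{kc,ld}=\frac{Q_{ic}Q_{jd}}{Q_{id}Q_{jc}}(U_{ij})_{kl}(V_{ab})_{cd}$, and $U\,{}_Q\!\otimes V$ by the formula for $W^\circ$ in the statement ($i,j,k,l\in\{1,\dots,M\}$, $a,b,c,d\in\{1,\dots,N\}$). *)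

(* Defs.v *)
From mathcomp Require Import all_boot all_order all_algebra.
Set Implicit Arguments. Unset Strict Implicit. Unset Printing Implicit Defensive.
Import GRing.Theory Num.Theory.
Local Open Scope ring_scope.

(* Complex numbers are modelled by an arbitrary numClosedFieldType C
   (algebraically closed field with conjugation and norm; includes C). *)

Definition adjmx (C : numClosedFieldType) m n (A : 'M[C]_(m, n)) : 'M[C]_(n, m) :=
  (map_mx (fun z => z^*) A)^T.

Definition is_projection (C : numClosedFieldType) m (P : 'M[C]_m) : Prop :=
  adjmx P = P /\ P *m P = P.

Definition magic (C : numClosedFieldType) m n (U : 'M['M[C]_m]_n) : Prop :=
  [/\ forall i j, is_projection (U i j),
      forall i, \sum_j U i j = 1%:M
    & forall j, \sum_i U i j = 1%:M].

Definition mprime (C : numClosedFieldType) n (U : 'M['M[C]_n]_n) : 'M['M[C]_n]_n :=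
  \matrix_(k, l) \matrix_(i, j) U i j k l.

Definition projective_model (C : numClosedFieldType) n (U : 'M['M[C]_n]_n) : Prop :=
  magic U /\ magic (mprime U).

(* identification of 'I_(M*N) with pairs (i,a) in 'I_M * 'I_N
   (inverse of mxvec_index) *)
Definition pidx M N (x : 'I_(M * N)) : 'I_M * 'I_N :=
  enum_val (cast_ord (esym (mxvec_cast M N)) x).

Definition tensorQ (C : numClosedFieldType) M N (Q : 'M[C]_(M, N))
  (U : 'M['M[C]_M]_M) (V : 'M['M[C]_N]_N) : 'M['M[C]_(M * N)]_(M * N) :=
  \matrix_(x, y) \matrix_(z, w)
    let i := (pidx x).1 in let a := (pidx x).2 in
    let j := (pidx y).1 in let b := (pidx y).2 in
    let k := (pidx z).1 in let c := (pidx z).2 in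
    let l := (pidx w).1 in let d := (pidx w).2 in
    Q i c * Q j d / (Q i d * Q j c) * U i j k l * V a b c d.

Definition ltensorQ (C : numClosedFieldType) M N (Q : 'M[C]_(M, N))
  (U : 'M['M[C]_M]_M) (V : 'M['M[C]_N]_N) : 'M['M[C]_(M * N)]_(M * N) :=
  \matrix_(x, y) \matrix_(z, w)
    let i := (pidx x).1 in let a := (pidx x).2 in
    let j := (pidx y).1 in let b := (pidx y).2 in
    let k := (pidx z).1 in let c := (pidx z).2 in
    let l := (pidx w).1 in let d := (pidx w).2 in
    Q k a * Q l b / (Q k b * Q l a) * U i j k l * V a b c d.

(* Main.v *)
Require Import Defs.
From mathcomp Require Import all_boot all_order all_algebra.
From mathcomp Require Import ring.
Import GRing.Theory Num.Theory.
Local Open Scope ring_scope.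

Section Aux.
Variables M N : nat.
Definition pinv (p : 'I_M * 'I_N) : 'I_(M * N) :=
  cast_ord (mxvec_cast M N) (enum_rank p).
Lemma pidxK (p : 'I_M * 'I_N) : pidx (pinv p) = p.
Proof. by rewrite /pidx /pinv cast_ordK enum_rankK. Qed.
Lemma pinvK (x : 'I_(M * N)) : pinv (pidx x) = x.
Proof. by rewrite /pidx /pinv enum_valK cast_ordKV. Qed.
Lemma pinv_surj (x : 'I_(M * N)) : exists i a, x = pinv (i, a).
Proof. by exists (pidx x).1, (pidx x).2; rewrite -surjective_pairing pinvK. Qed.
Lemma pinv_eq i a j b : (pinv (i, a) == pinv (j, b)) = (i == j) && (a == b).
Proof.
apply/eqP/andP => [h|[/eqP -> /eqP ->] //].
have := congr1 (@pidx M N) h; rewrite !pidxK => -[-> ->]; by split.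
Qed.
Lemma sum_pinv (R : nmodType) (F : 'I_(M * N) -> R) :
  \sum_x F x = \sum_i \sum_a F (pinv (i, a)).
Proof.
rewrite pair_big /= (reindex pinv) /=; last first.
  by exists (@pidx M N) => [x _|p _]; rewrite ?pidxK ?pinvK.
by apply: eq_bigr => -[i a].
Qed.
End Aux.
Arguments pinv {M N} p.
Arguments pinv_surj {M N} x.
Arguments pinv_eq {M N} i a j b.
Arguments sum_pinv {M N R} F.
Arguments pidxK {M N} p.
Arguments pinvK {M N} x.

Lemma ltensorQE (C : numClosedFieldType) M N (Q : 'M[C]_(M, N)) (U : 'M['M[C]_M]_M) (V : 'M['M[C]_N]_N) i a j b k c l d :
  ltensorQ Q U V (pinv (i, a)) (pinv (j, b)) (pinv (k, c)) (pinv (l, d)) =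
  Q k a * Q l b / (Q k b * Q l a) * U i j k l * V a b c d.
Proof. by rewrite !mxE !pidxK. Qed.

Lemma tensorQE (C : numClosedFieldType) M N (Q : 'M[C]_(M, N)) (U : 'M['M[C]_M]_M) (V : 'M['M[C]_N]_N) i a j b k c l d :
  tensorQ Q U V (pinv (i, a)) (pinv (j, b)) (pinv (k, c)) (pinv (l, d)) =
  Q i c * Q j d / (Q i d * Q j c) * U i j k l * V a b c d.
Proof. by rewrite !mxE !pidxK. Qed.

Lemma mprimeK (C : numClosedFieldType) n (U : 'M['M[C]_n]_n) : mprime (mprime U) = U.
Proof. by apply/matrixP => i j; apply/matrixP => k l; rewrite !mxE. Qed.

Lemma conj_unit {C : numClosedFieldType} {q : C} : `|q| = 1 -> q^* = q^-1.
Proof. by move=> h; rewrite invC_norm h expr1n invr1 mul1r. Qed.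

Lemma id_entry (C : numClosedFieldType) M N i a j b :
  (1%:M : 'M[C]_(M * N)) (pinv (i, a)) (pinv (j, b)) = ((i == j)%:R * (a == b)%:R).
Proof. by rewrite mxE pinv_eq -natrM mulnb. Qed.

Lemma id_entry1 (C : numClosedFieldType) n (i j : 'I_n) :
  (1%:M : 'M[C]_n) i j = (i == j)%:R.
Proof. by rewrite mxE. Qed.
Lemma L1 (C : numClosedFieldType) (M N : nat)
  (U : 'M['M[C]_M]_M) (V : 'M['M[C]_N]_N) (Q : 'M[C]_(M, N)) :
  magic U -> magic V -> (forall k a, `|Q k a| = 1) -> magic (ltensorQ Q U V).
Proof.
move=> [Up Ur Uc] [Vp Vr Vc] Qn.
have nz k a : Q k a != 0 by rewrite -normr_eq0 Qn oner_neq0.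
have cK k a b : Q k a * Q k b / (Q k b * Q k a) = 1.
  by rewrite [Q k a * _]mulrC mulfV // mulf_neq0.
split.
- move=> x y; have [i [a ->]] := pinv_surj x; have [j [b ->]] := pinv_surj y.
  have [Ua UU] := Up i j; have [Va VV] := Vp a b.
  split.
  + apply/matrixP => z w.
    have [k [c ->]] := pinv_surj z; have [l [d ->]] := pinv_surj w.
    rewrite /adjmx mxE [in RHS]ltensorQE mxE ltensorQE.
    have -> : U i j k l = (U i j l k)^* by rewrite -{1}Ua !mxE.
    have -> : V a b c d = (V a b d c)^* by rewrite -{1}Va !mxE.
    rewrite !rmorphM /= !fmorphV /= !rmorphM /= !(conj_unit (Qn _ _)).
    by field; rewrite ?nz.

  + apply/matrixP => z w.
    have [k [c ->]] := pinv_surj z; have [l [d ->]] := pinv_surj w.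
    rewrite [LHS]mxE sum_pinv [in RHS]ltensorQE.
    have -> : U i j k l = (U i j *m U i j) k l by rewrite UU.
    have -> : V a b c d = (V a b *m V a b) c d by rewrite VV.
    rewrite [in RHS]mxE [in RHS]mxE. rewrite -mulrA big_distrlr mulr_sumr /=; apply: eq_bigr => m _.
    rewrite mulr_sumr /=; apply: eq_bigr => e _.
    rewrite !ltensorQE. by field; rewrite ?nz.
- move=> x; apply/matrixP => z w.
  have [i [a ->]] := pinv_surj x.
  have [k [c ->]] := pinv_surj z; have [l [d ->]] := pinv_surj w.
  rewrite summxE sum_pinv id_entry.
  under eq_bigr do under eq_bigr do rewrite ltensorQE.
  rewrite exchange_big /=.
  transitivity (\sum_b ((k == l)%:R * V a b c d)).
    apply: eq_bigr => b _; rewrite -big_distrl -mulr_sumr /=.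
    rewrite -summxE Ur id_entry1; case: eqP => [->|_].
      by rewrite cK mul1r.
    by rewrite !mulr0 mul0r.
  by rewrite -mulr_sumr -summxE Vr id_entry1.
- move=> y; apply/matrixP => z w.
  have [j [b ->]] := pinv_surj y.
  have [k [c ->]] := pinv_surj z; have [l [d ->]] := pinv_surj w.
  rewrite summxE sum_pinv id_entry.
  under eq_bigr do under eq_bigr do rewrite ltensorQE.
  rewrite exchange_big /=.
  transitivity (\sum_a ((k == l)%:R * V a b c d)).
    apply: eq_bigr => a _; rewrite -big_distrl -mulr_sumr /=.
    rewrite -summxE Uc id_entry1; case: eqP => [->|_].
      by rewrite cK mul1r.
    by rewrite !mulr0 mul0r.
  by rewrite -mulr_sumr -summxE Vc id_entry1.
Qed.

Lemma L2 (C : numClosedFieldType) (M N : nat)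
  (U : 'M['M[C]_M]_M) (V : 'M['M[C]_N]_N) (Q : 'M[C]_(M, N)) :
  magic U -> magic V -> (forall k a, `|Q k a| = 1) -> magic (tensorQ Q U V).
Proof.
move=> [Up Ur Uc] [Vp Vr Vc] Qn.
have nz k a : Q k a != 0 by rewrite -normr_eq0 Qn oner_neq0.
have cK i j c : Q i c * Q j c / (Q i c * Q j c) = 1.
  by rewrite mulfV // mulf_neq0.
split.
- move=> x y; have [i [a ->]] := pinv_surj x; have [j [b ->]] := pinv_surj y.
  have [Ua UU] := Up i j; have [Va VV] := Vp a b.
  split.
  + apply/matrixP => z w.
    have [k [c ->]] := pinv_surj z; have [l [d ->]] := pinv_surj w.
    rewrite /adjmx mxE [in RHS]tensorQE mxE tensorQE.
    have -> : U i j k l = (U i j l k)^* by rewrite -{1}Ua !mxE.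
    have -> : V a b c d = (V a b d c)^* by rewrite -{1}Va !mxE.
    rewrite !rmorphM /= !fmorphV /= !rmorphM /= !(conj_unit (Qn _ _)).
    by field; rewrite ?nz.
  + apply/matrixP => z w.
    have [k [c ->]] := pinv_surj z; have [l [d ->]] := pinv_surj w.
    rewrite [LHS]mxE sum_pinv [in RHS]tensorQE.
    have -> : U i j k l = (U i j *m U i j) k l by rewrite UU.
    have -> : V a b c d = (V a b *m V a b) c d by rewrite VV.
    rewrite [in RHS]mxE [in RHS]mxE.
    rewrite -mulrA big_distrlr mulr_sumr /=; apply: eq_bigr => m _.
    rewrite mulr_sumr /=; apply: eq_bigr => e _.
    rewrite !tensorQE. by field; rewrite ?nz.
- move=> x; apply/matrixP => z w.
  have [i [a ->]] := pinv_surj x.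
  have [k [c ->]] := pinv_surj z; have [l [d ->]] := pinv_surj w.
  rewrite summxE sum_pinv id_entry.
  under eq_bigr do under eq_bigr do rewrite tensorQE.
  transitivity (\sum_j (U i j k l * (c == d)%:R)).
    apply: eq_bigr => j _; rewrite -mulr_sumr /=.
    rewrite -summxE Vr id_entry1; case: eqP => [->|_].
      by rewrite cK mul1r.
    by rewrite !mulr0.
  by rewrite -big_distrl /= -summxE Ur id_entry1.
- move=> y; apply/matrixP => z w.
  have [j [b ->]] := pinv_surj y.
  have [k [c ->]] := pinv_surj z; have [l [d ->]] := pinv_surj w.
  rewrite summxE sum_pinv id_entry.
  under eq_bigr do under eq_bigr do rewrite tensorQE.
  transitivity (\sum_i (U i j k l * (c == d)%:R)).
    apply: eq_bigr => i _; rewrite -mulr_sumr /=.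
    rewrite -summxE Vc id_entry1; case: eqP => [->|_].
      by rewrite cK mul1r.
    by rewrite !mulr0.
  by rewrite -big_distrl /= -summxE Uc id_entry1.
Qed.

Theorem proposition2p5 (C : numClosedFieldType) (M N : nat)
  (U : 'M['M[C]_M]_M) (V : 'M['M[C]_N]_N) (Q : 'M[C]_(M, N)) :
  projective_model U -> projective_model V ->
  (forall k a, `|Q k a| = 1) ->
  [/\ projective_model (ltensorQ Q U V),
      mprime (tensorQ Q U V) = ltensorQ Q (mprime U) (mprime V)
    & mprime (ltensorQ Q U V) = tensorQ Q (mprime U) (mprime V)].
Proof.
move=> [mU mU'] [mV mV'] Qn.
have e2 : mprime (tensorQ Q U V) = ltensorQ Q (mprime U) (mprime V).
  apply/matrixP => x y; apply/matrixP => z w; by rewrite !mxE /= !mxE.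
have e3 : mprime (ltensorQ Q U V) = tensorQ Q (mprime U) (mprime V).
  by apply/matrixP => x y; apply/matrixP => z w; rewrite !mxE /= !mxE.
split => //; split; first exact: L1.
by rewrite e3; apply: L2.
Qed.
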